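(* For all $\vec z,\vec a\in\mathbb{C}^n$ (with $d_{\tan}$ possibly $+\infty$), \[ \tfrac12\big\||\pi_{\vec z}\rangle\langle\pi_{\vec z}|-|\pi_{\vec a}\rangle\langle\pi_{\vec a}|\big\|_1=\big\||\pi_{\vec z}\rangle\langle\pi_{\vec z}|-|\pi_{\vec a}\rangle\langle\pi_{\vec a}|\big\|_{\mathrm{op}}\le d_{\tan}(|\pi_{\vec z}\rangle,|\pi_{\vec a}\rangle). \]
   Context: For $\vec z\in\mathbb{C}^n$, $|\pi_{\vec z}\rangle=\bigotimes_{i=1}^n \frac{|0\rangle+z_i|1\rangle}{\sqrt{1+|z_i|^2}}$; the tangent distance is $d_{\tan}(|\pi_{\vec z}\rangle,|\pi_{\vec a}\rangle)=\big(\sum_{i=1}^n|\frac{z_i-a_i}{1+z_i^*a_i}|^2\big)^{1/2}$ (a summand with vanishing denominator is $+\infty$). $\|\cdot\|_1$ is the trace norm and $\|\cdot\|_{\mathrm{op}}$ the operator norm. *)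

(* Defs.v *)
From HB Require Import structures.
From mathcomp Require Import all_boot all_order all_algebra.
From mathcomp Require Import spectral sesquilinear.
From mathcomp Require Import complex.
From mathcomp Require Import classical_sets reals constructive_ereal.
Set Implicit Arguments. Unset Strict Implicit. Unset Printing Implicit Defensive.
Import Order.TTheory GRing.Theory Num.Theory.
Local Open Scope ring_scope.
Local Open Scope classical_set_scope.

Section Defs.
Variable R : realType.
Local Notation C := (R[i]).

Definition cabs2 (x : C) : R := complex.Re (x * x^*).

Definition qubit_amp (z : C) (b : bool) : C :=
  (if b then z else 1) / (Num.sqrt (1 + cabs2 z))%:C%C.

(* |pi_z> = tensor_{i<n} (|0> + z_i|1>)/sqrt(1+|z_i|^2), as a column vector
   in C^(2^n); the computational basis vector with index k (0 <= k < 2^n)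
   corresponds to the bit string whose i-th bit is the i-th binary digit of k. *)
Definition pistate n (z : 'I_n -> C) : 'cV[C]_(2 ^ n) :=
  \col_(k < 2 ^ n) \prod_(i < n) qubit_amp (z i) (odd (k %/ 2 ^ i)).

Definition proj_of N (v : 'cV[C]_N) : 'M[C]_N := v *m (map_mx Num.conj v)^T.

Definition vnorm N (v : 'cV[C]_N) : R := Num.sqrt (\sum_(i < N) cabs2 (v i 0)).

Definition opnorm N (A : 'M[C]_N) : R :=
  sup [set vnorm (A *m v) | v in [set v : 'cV[C]_N | vnorm v = 1]].

(* trace norm: sum of the singular values of A, i.e. of the square roots of
   the eigenvalues (with multiplicity) of the Hermitian matrix A^* A *)
Definition tracenorm N (A : 'M[C]_N) : R :=
  \sum_(i < N) complex.Re (sqrtC (spectral_diag ((map_mx Num.conj A)^T *m A) 0 i)).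

Definition dtan n (z a : 'I_n -> C) : \bar R :=
  if [exists i, 1 + (z i)^* * a i == 0] then +oo%E
  else (Num.sqrt (\sum_(i < n) cabs2 ((z i - a i) / (1 + (z i)^* * a i))))%:E.

End Defs.

(* Main.v *)
Set Warnings "-notation-overridden,-ambiguous-paths".
Require Import Defs.
From HB Require Import structures.
From mathcomp Require Import all_boot all_order all_algebra.
From mathcomp Require Import spectral sesquilinear complex.
From mathcomp Require Import classical_sets reals constructive_ereal.
From mathcomp Require Import ring lra.
Import Order.TTheory GRing.Theory Num.Theory.
Set Implicit Arguments. Unset Strict Implicit. Unset Printing Implicit Defensive.
Local Open Scope ring_scope.
Local Open Scope complex_scope.
Local Open Scope ring_scope.

Section Scalars.
Variable R : realType.
Local Notation C := (R[i]).

Lemma conjE (x : C) : Num.conj x = conjc x.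
Proof. by []. Qed.

Lemma cabs2C (x : C) : (cabs2 x)%:C = x * x^*.
Proof.
rewrite conjE /cabs2; case: x => a b /=.
rewrite /real_complex_def; congr Complex => /=; ring.
Qed.

Lemma cabs2_ge0 (x : C) : 0 <= cabs2 x.
Proof. rewrite /cabs2; case: x => a b /=; nra. Qed.

Lemma cabs2_eq0 (x : C) : (cabs2 x == 0) = (x == 0).
Proof.
apply/eqP/eqP => [h|->]; last by rewrite /cabs2 /=; ring.
move: h; rewrite /cabs2; case: x => a b /= h.
have ha : a = 0 by nra.
have hb : b = 0 by nra.
by rewrite ha hb.
Qed.

Lemma cabs2M (x y : C) : cabs2 (x * y) = cabs2 x * cabs2 y.
Proof.
apply: (@complexI R); rewrite rmorphM /= !cabs2C rmorphM /=; ring.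
Qed.

Lemma cabs2_1 : cabs2 (1 : C) = 1.
Proof. rewrite /cabs2 /=; ring. Qed.

Lemma cabs2V (x : C) : cabs2 (x^-1) = (cabs2 x)^-1.
Proof.
have [->|nx] := eqVneq x 0.
  by rewrite invr0 (eqP (introT eqP (erefl (0:C)))) ; move: (cabs2_eq0 (0:C)); rewrite eqxx => /eqP ->; rewrite invr0.
have nc : cabs2 x != 0 by rewrite cabs2_eq0.
apply: (mulIf nc); rewrite -cabs2M mulVf // mulVf //; exact: cabs2_1.
Qed.

Lemma cabs2_real (r : R) : cabs2 r%:C = r ^+ 2.
Proof. rewrite /cabs2 /=. ring. Qed.

Lemma cabs2_id (z a : C) :
  cabs2 (1 + z^* * a) + cabs2 (z - a) = (1 + cabs2 z) * (1 + cabs2 a).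
Proof.
rewrite conjE /cabs2; case: z => z1 z2; case: a => a1 a2 /=; ring.
Qed.


Lemma tensor_sum (T : comNzRingType) n (f : 'I_n -> bool -> T) :
  \sum_(k < 2 ^ n) \prod_(i < n) f i (odd (k %/ 2 ^ i)%N) =
  \prod_(i < n) (f i false + f i true).
Proof.
elim: n f => [|n IH] f.
  by rewrite big_ord1 !big_ord0.
rewrite big_ord_recr /= -(IH (fun i => f (widen_ord (leqnSn n) i))).
rewrite -(big_mkord xpredT (fun k => \prod_(i < n.+1) f i (odd (k %/ 2 ^ i)%N))).
rewrite expnS mul2n -addnn (big_cat_nat _ (leq_addr _ _)) //=.
rewrite (big_addn 0 (2 ^ n + 2 ^ n) (2 ^ n)) addnK.
rewrite mulrDr !big_mkord; congr (_ + _); rewrite mulr_suml; apply: eq_bigr => k _;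
  rewrite big_ord_recr /=.
  by rewrite divn_small ?ltn_ord.
congr (_ * _).
  apply: eq_bigr => i _; congr (f _ _).
  have hi : (i < n)%N by [].
  have e : (2 ^ n = 2 ^ (n - i) * 2 ^ i)%N by rewrite -expnD subnK // ltnW.
  rewrite [X in ((_ + X) %/ _)%N]e divnDMl ?expn_gt0 // oddD oddX.
  by rewrite subn_eq0 leqNgt hi /= addbF.
by rewrite -{2}(mul1n (2 ^ n)%N) divnDMl ?expn_gt0 // divn_small ?ltn_ord.
Qed.

End Scalars.

Notation adjm A := ((map_mx Num.conj A)^T).

Section Mat.
Variable R : realType.
Local Notation C := (R[i]).

Lemma conjK (x : C) : Num.conj (Num.conj x) = x.
Proof. exact: conjCK. Qed.

Definition ip N (x y : 'cV[C]_N) : C := (adjm x *m y) 0 0.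

Lemma adjmK m n (A : 'M[C]_(m, n)) : adjm (adjm A) = A.
Proof. apply/matrixP => i j; rewrite !mxE; exact: conjCK. Qed.

Lemma adjmM m n p (A : 'M[C]_(m, n)) (B : 'M[C]_(n, p)) :
  adjm (A *m B) = adjm B *m adjm A.
Proof. by rewrite map_mxM trmx_mul. Qed.

Lemma adjmB m n (A B : 'M[C]_(m, n)) : adjm (A - B) = adjm A - adjm B.
Proof. by apply/matrixP => i j; rewrite !mxE rmorphB. Qed.

Lemma adjmZ m n a (A : 'M[C]_(m, n)) : adjm (a *: A) = a^* *: adjm A.
Proof. by apply/matrixP => i j; rewrite !mxE rmorphM. Qed.

Lemma outerV N (x y w : 'cV[C]_N) : (x *m adjm y) *m w = ip y w *: x.
Proof. by rewrite -mulmxA [adjm y *m w]mx11_scalar mul_mx_scalar. Qed.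

Lemma outerM N (x y w t : 'cV[C]_N) :
  (x *m adjm y) *m (w *m adjm t) = ip y w *: (x *m adjm t).
Proof. by rewrite mulmxA outerV scalemxAl. Qed.

Lemma ip_conj N (x y : 'cV[C]_N) : ip y x = (ip x y)^*.
Proof.
rewrite /ip !mxE rmorph_sum; apply: eq_bigr => i _.
by rewrite !mxE rmorphM /= conjK mulrC.
Qed.

Lemma ip_self N (x : 'cV[C]_N) : ip x x = (\sum_i cabs2 (x i 0))%:C.
Proof.
rewrite /ip !mxE rmorph_sum; apply: eq_bigr => i _ /=.
by rewrite !mxE cabs2C mulrC.
Qed.

Lemma tr_outer N (x y : 'cV[C]_N) : \tr (x *m adjm y) = ip y x.
Proof. by rewrite mxtrace_mulC /mxtrace big_ord1. Qed.

Lemma ipB N (x y w : 'cV[C]_N) a : ip w (x - a *: y) = ip w x - a * ip w y.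
Proof. by rewrite /ip mulmxBr -scalemxAr !mxE. Qed.

Lemma ipA N (A : 'M[C]_N) (x y : 'cV[C]_N) : ip (A *m x) y = ip x (adjm A *m y).
Proof. by rewrite /ip adjmM mulmxA. Qed.

End Mat.

Section Proj.
Variables (R : realType) (N : nat) (u v : 'cV[R[i]]_N).
Hypotheses (hu : ip u u = 1) (hv : ip v v = 1).
Local Notation c := (ip u v).
Local Notation Dm := (u *m adjm u - v *m adjm v).

Lemma ipvu : ip v u = c^*.
Proof. exact: ip_conj. Qed.

Lemma adjD : adjm Dm = Dm.
Proof. by rewrite adjmB !adjmM !adjmK. Qed.

Lemma ipZ (w x : 'cV[R[i]]_N) a : ip w (a *: x) = a * ip w x.
Proof. by rewrite /ip -scalemxAr !mxE. Qed.

Lemma D2 : Dm *m Dm = u *m adjm u - c *: (u *m adjm v) - c^* *: (v *m adjm u)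
   + v *m adjm v.
Proof.
rewrite !mulmxDl !mulmxDr !mulNmx !mulmxN !outerM ?hu ?hv ?ipvu !scale1r.
apply/matrixP => i j; rewrite !mxE; ring.
Qed.

Lemma D3 : (Dm *m Dm) *m Dm = (1 - c * c^*) *: Dm.
Proof.
rewrite D2 !mulmxDl !mulNmx -!scalemxAl !mulmxDr !mulmxN !outerM ?hu ?hv ?ipvu !scale1r.
apply/matrixP => i j; rewrite !mxE; ring.
Qed.

Lemma trD2 : \tr (Dm *m Dm) = 2%:R * (1 - c * c^*).
Proof.
rewrite D2 !mxtraceD !raddfN /= !mxtraceZ !tr_outer hu hv ipvu; ring.
Qed.

Lemma D2u : (Dm *m Dm) *m u = (1 - c * c^*) *: u.
Proof.
rewrite D2 !mulmxDl !mulNmx -!scalemxAl !outerV ?hu ?hv ?ipvu !scale1r.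
apply/matrixP => i j; rewrite !mxE; ring.
Qed.

Lemma Du : ip (Dm *m u) (Dm *m u) = 1 - c * c^*.
Proof. by rewrite ipA adjD mulmxA D2u ipZ hu mulr1. Qed.

End Proj.

Definition nrm2 (R : realType) N (w : 'cV[R[i]]_N) : R := \sum_i cabs2 (w i 0).

Lemma nrm2_ge0 (R : realType) N (w : 'cV[R[i]]_N) : 0 <= nrm2 w.
Proof. by apply: sumr_ge0 => i _; apply: cabs2_ge0. Qed.

Lemma ip_nrm2 (R : realType) N (w : 'cV[R[i]]_N) : ip w w = (nrm2 w)%:C.
Proof. exact: ip_self. Qed.

Lemma ipBl (R : realType) N (x y w : 'cV[R[i]]_N) a :
  ip (x - a *: y) w = ip x w - a^* * ip y w.
Proof. by rewrite ip_conj ipB rmorphB rmorphM /= -!ip_conj. Qed.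

Lemma conj_real (R : realType) (r : R) : (r%:C)^* = r%:C :> R[i].
Proof. by rewrite conjE conjc_real. Qed.

Section Bound.
Variables (R : realType) (N : nat) (u v : 'cV[R[i]]_N).
Hypotheses (hu : ip u u = 1) (hv : ip v v = 1).
Local Notation c := (ip u v).
Local Notation Dm := (u *m adjm u - v *m adjm v).

Lemma opbound w : nrm2 w = 1 -> nrm2 (Dm *m w) <= nrm2 (Dm *m u).
Proof.
move=> hw.
set s := nrm2 (Dm *m u).
have hs : s%:C = 1 - c * c^* by rewrite -ip_nrm2 Du.
set x := nrm2 (Dm *m w).
set y := (Dm *m Dm) *m w.
have hx : ip w y = x%:C by rewrite -ip_nrm2 ipA adjD mulmxA.
have hyw : ip y w = x%:C by rewrite ip_conj hx conj_real.
have hyy : ip y y = s%:C * x%:C.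
  have e : (Dm *m Dm) *m ((Dm *m Dm) *m w) = (1 - c*c^*) *: y.
    by rewrite mulmxA [(Dm *m Dm) *m (Dm *m Dm)]mulmxA (D3 hu hv) -!scalemxAl.
  by rewrite /y ipA adjmM adjD e ipZ hx hs.
have key : forall t : R, 0 <= 1 - 2%:R * t * x + t * t * s * x.
  move=> t; have := nrm2_ge0 (w - t%:C *: y).
  suff -> : nrm2 (w - t%:C *: y) = 1 - 2%:R * t * x + t * t * s * x by [].
  apply: (@complexI R); rewrite -ip_nrm2 ipBl !ipB ip_nrm2 hw hx hyw hyy conj_real.
  rewrite !(rmorphD, rmorphB, rmorphM, rmorphN, rmorph1, rmorph_nat) /=; ring.
have hs0 : 0 <= s by apply: nrm2_ge0.
have [hx0|hx0] := lerP x 0; first exact: le_trans hx0 hs0.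
have xn0 : x != 0 by rewrite gt_eqF.
have h1 : 0 <= x^-1 * s - 1.
  have := key x^-1.
  suff -> : 1 - 2%:R * x^-1 * x + x^-1 * x^-1 * s * x = x^-1 * s - 1 by [].
  by field.
have := mulr_ge0 (ltW hx0) h1.
have -> : x * (x^-1 * s - 1) = s - x by field.
by rewrite subr_ge0.
Qed.

End Bound.

Section Trace.
Variables (R : realType) (N : nat) (u v : 'cV[R[i]]_N).
Hypotheses (hu : ip u u = 1) (hv : ip v v = 1).
Local Notation c := (ip u v).
Local Notation Dm := (u *m adjm u - v *m adjm v).
Local Notation E := (adjm Dm *m Dm).

Lemma EE : E *m E = (1 - c * c^*) *: E.
Proof.
by rewrite adjD mulmxA (D3 hu hv) -scalemxAl.
Qed.

Lemma normalE : E \is normalmx.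
Proof.
have h : map_mx Num.conj (E ^T) = E by rewrite -map_trmx adjmM adjmK.
by rewrite qualifE h.
Qed.

Lemma d_props :
  (forall i, spectral_diag E 0 i = 0 \/ spectral_diag E 0 i = 1 - c * c^*) /\
  \sum_i spectral_diag E 0 i = 2%:R * (1 - c * c^*).
Proof.
have EE0 := EE.
have nE := normalE.
set E0 := (adjm Dm *m Dm) in EE0 nE *.
have E0def : E0 = adjm Dm *m Dm by [].
clearbody E0.
have /orthomx_spectralP hE := nE.
set P := spectralmx E0 in hE; set d := spectral_diag E0 in hE *.
have PU : P \in unitmx by apply: spectral_unit.
have hF : P *m E0 *m invmx P = diag_mx d.
  by rewrite {1}hE !mulmxA (mulmxV PU) mul1mx (mulmxK PU).
have FF : diag_mx d *m diag_mx d = (1 - c * c^*) *: diag_mx d.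
  rewrite -hF !mulmxA (mulmxKV PU) -(mulmxA P E0 E0) EE0.
  by rewrite -scalemxAr -scalemxAl.
split.
  move=> i; have /matrixP /(_ i i) := FF.
  rewrite mul_diag_mx !mxE eqxx mulr1n => /eqP.
  rewrite -subr_eq0 -mulrBl mulf_eq0 subr_eq0 => /orP[/eqP->|/eqP->]; by [right|left].
rewrite -mxtrace_diag -hF mxtrace_mulC mulmxA (mulVmx PU) mul1mx.
by rewrite E0def adjD (trD2 hu hv).
Qed.

End Trace.

Lemma prod_bound (R : realFieldType) n (p q : 'I_n -> R) :
  (forall i, 0 <= p i <= 1) -> (forall i, 1 - p i <= q i) ->
  1 - \prod_i p i <= \sum_i q i.
Proof.
elim: n p q => [|n IH] p q hp hq.
  by rewrite !big_ord0 subrr.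
rewrite big_ord_recr [\sum_(i < n.+1) _]big_ord_recr /=.
set P := \prod_(i < n) _.
have hP0 : 0 <= P by apply: prodr_ge0 => i _; case/andP: (hp (widen_ord (leqnSn n) i)).
have hP1 : P <= 1 by apply: prodr_ile1 => i _; exact: hp.
have IH' := IH (fun i => p (widen_ord (leqnSn n) i)) (fun i => q (widen_ord (leqnSn n) i))
  (fun i => hp _) (fun i => hq _).
have := hq ord_max; case/andP: (hp ord_max) => h0 h1.
rewrite -/P in IH'.
nra.
Qed.

Section Pi.
Variable R : realType.
Local Notation C := (R[i]).
Definition rho (x : C) : C := (Num.sqrt (1 + cabs2 x))%:C.

Lemma rho_pos (x : C) : 0 < Num.sqrt (1 + cabs2 x).
Proof. by rewrite sqrtr_gt0; have := cabs2_ge0 x; lra. Qed.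

Lemma rho_neq0 (x : C) : rho x != 0.
Proof. by rewrite /rho -(rmorph0 (real_complex R)) inj_eq ?gt_eqF ?rho_pos //; apply: complexI. Qed.

Lemma rho2 (x : C) : rho x * rho x = 1 + x * x^*.
Proof.
rewrite /rho -rmorphM /= -expr2 sqr_sqrtr; last by have := cabs2_ge0 x; lra.
by rewrite rmorphD /= cabs2C.
Qed.

Lemma amp_ip (z a : C) :
  (qubit_amp z false)^* * qubit_amp a false + (qubit_amp z true)^* * qubit_amp a true
  = (1 + z^* * a) / (rho z * rho a).
Proof.
rewrite /qubit_amp -/(rho z) -/(rho a) !fmorph_div /= !conj_real rmorph1.
have := rho_neq0 z; have := rho_neq0 a.
move=> h1 h2; field; rewrite h1 h2 //.
Qed.

Lemma pistate_ip n (z a : 'I_n -> C) :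
  ip (pistate z) (pistate a) = \prod_i ((1 + (z i)^* * a i) / (rho (z i) * rho (a i))).
Proof.
rewrite /ip mxE.
rewrite (eq_bigr (fun k : 'I_(2 ^ n) => \prod_(i < n)
   ((qubit_amp (z i) (odd (k %/ 2 ^ i)%N))^* * qubit_amp (a i) (odd (k %/ 2 ^ i)%N)))).
  rewrite (tensor_sum (fun i b => (qubit_amp (z i) b)^* * qubit_amp (a i) b)).
  by apply: eq_bigr => i _; rewrite amp_ip.
by move=> k _; rewrite !mxE rmorph_prod -big_split.
Qed.

Lemma pistate_unit n (z : 'I_n -> C) : ip (pistate z) (pistate z) = 1.
Proof.
rewrite pistate_ip; apply: big1 => i _.
rewrite rho2 [(z i)^* * _]mulrC divff //.
by rewrite -rho2 mulf_neq0 // rho_neq0.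
Qed.

End Pi.

Section Fin.
Variable R : realType.
Local Notation C := (R[i]).

Lemma cabs2_prod n (f : 'I_n -> C) : cabs2 (\prod_i f i) = \prod_i cabs2 (f i).
Proof.
apply: (@complexI R); rewrite rmorph_prod cabs2C rmorph_prod -big_split.
by apply: eq_bigr => i _ /=; rewrite cabs2C.
Qed.

Lemma cabs2_factor (z a : C) :
  cabs2 ((1 + z^* * a) / (rho z * rho a)) =
  cabs2 (1 + z^* * a) / ((1 + cabs2 z) * (1 + cabs2 a)).
Proof.
rewrite cabs2M cabs2V cabs2M /rho !cabs2_real !sqr_sqrtr //.
  by have := cabs2_ge0 a; lra.
by have := cabs2_ge0 z; lra.
Qed.

Lemma term_bound (z a : C) : 1 + z^* * a != 0 ->
  let p := cabs2 (1 + z^* * a) / ((1 + cabs2 z) * (1 + cabs2 a)) in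
  (0 <= p <= 1) /\ 1 - p <= cabs2 ((z - a) / (1 + z^* * a)).
Proof.
move=> nz p.
have hA : 0 < cabs2 (1 + z^* * a).
  by rewrite lt_def cabs2_eq0 nz cabs2_ge0.
have hB := cabs2_ge0 (z - a).
have hid := cabs2_id z a.
rewrite /p -hid cabs2M cabs2V.
set A := cabs2 (1 + z^* * a) in hA *; set B := cabs2 (z - a) in hB *.
have hAB : 0 < A + B by lra.
split.
  apply/andP; split; first by apply: divr_ge0; lra.
  by rewrite ler_pdivrMr // mul1r; lra.
have -> : 1 - A / (A + B) = B / (A + B) by field; lra.
apply: ler_wpM2l; first by lra.
by rewrite lef_pV2 ?posrE //; lra.
Qed.

End Fin.

Theorem corollary3p7 (R : realType) (n : nat) (z a : 'I_n -> R[i]) :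
  let D := proj_of (pistate z) - proj_of (pistate a) in
  2^-1 * tracenorm D = opnorm D /\ ((opnorm D)%:E <= dtan z a)%E.
Proof.
move=> D.
have hu := pistate_unit z; have hv := pistate_unit a.
move: hu hv; rewrite /D /proj_of; set u := pistate z; set v := pistate a => hu hv.
set s2 := nrm2 ((u *m adjm u - v *m adjm v) *m u).
have hs2 : s2%:C = 1 - ip u v * (ip u v)^* by rewrite -ip_nrm2 Du.
have s20 : 0 <= s2 by apply: nrm2_ge0.
set s := Num.sqrt s2.
have s0 : 0 <= s by apply: sqrtr_ge0.
have ss : s * s = s2 by rewrite -expr2 sqr_sqrtr.
have nu : nrm2 u = 1.
  by apply: (@complexI R); rewrite -ip_nrm2 hu.
have hub : ubound [set vnorm ((u *m adjm u - v *m adjm v) *m w) |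
                   w in [set w : 'cV[R[i]]_(2 ^ n) | vnorm w = 1]] s.
  move=> y [w hw <-].
  have nw : nrm2 w = 1.
    by rewrite -[nrm2 w]sqr_sqrtr ?nrm2_ge0 //; move: hw; rewrite /vnorm => ->; rewrite expr1n.
  rewrite /vnorm /s ler_sqrt //.
  exact: opbound.
have opn : opnorm (u *m adjm u - v *m adjm v) = s.
  rewrite /opnorm; apply/eqP; rewrite eq_le; apply/andP; split.
    apply: ge_sup => //.
    exists s; exists u => //.
    by rewrite /vnorm; change (Num.sqrt (nrm2 u) = 1); rewrite nu sqrtr1.
  apply: ub_le_sup; first by exists s.
  exists u; last by [].
  by rewrite /vnorm; change (Num.sqrt (nrm2 u) = 1); rewrite nu sqrtr1.
have trn : tracenorm (u *m adjm u - v *m adjm v) = 2%:R * s.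
  have [dv dsum] := d_props hu hv.
  rewrite /tracenorm.
  set d := spectral_diag _ in dv dsum *.
  have key : forall i, s * complex.Re (sqrtC (d 0 i)) = complex.Re (d 0 i).
    move=> i; case: (dv i) => ->; first by rewrite sqrtC0 /= mulr0.
    have hsq : sqrtC (s2%:C) = s%:C.
      by rewrite -ss rmorphM -expr2 sqrCK // ler0c.
    by rewrite -hs2 hsq /=.
  have sumRe : s * \sum_i complex.Re (sqrtC (d 0 i)) = 2%:R * s2.
    rewrite mulr_sumr (eq_bigr _ (fun i _ => key i)) -raddf_sum dsum -hs2.
    have -> : (2%:R : R[i]) * s2%:C = (2%:R * s2)%:C by rewrite rmorphM rmorph_nat.
    by [].
  have [s_eq0|s_gt0] := eqVneq s 0.
    have s2_0 : s2 = 0 by rewrite -ss s_eq0 mulr0.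
    rewrite s_eq0 mulr0; apply: big1 => i _.
    have -> : d 0 i = 0.
      by case: (dv i) => // ->; rewrite -hs2 s2_0.
    by rewrite sqrtC0.
  apply: (mulfI s_gt0); rewrite sumRe -ss; ring.
split; first by rewrite trn opn mulKf ?pnatr_eq0.
rewrite opn /dtan; case: ifPn => [_|hne]; first exact: leey.
rewrite lee_fin ler_sqrt; last by apply: sumr_ge0 => i _; apply: cabs2_ge0.
have hne' : forall i, 1 + (z i)^* * a i != 0.
  move=> i; apply/negP => h; apply: (negP hne); apply/existsP; exists i; exact: h.
have hcs : s2 = 1 - \prod_i (cabs2 (1 + (z i)^* * a i) / ((1 + cabs2 (z i)) * (1 + cabs2 (a i)))).
  apply: (@complexI R); rewrite hs2 -cabs2C rmorphB rmorph1 /= /u /v pistate_ip cabs2_prod.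
  by congr (_ - _%:C); apply: eq_bigr => i _; exact: cabs2_factor.
rewrite hcs; apply: prod_bound => i; have [h1 h2] := term_bound (hne' i); [exact: h1 | exact: h2].
Qed.
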